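(* Let $K$ be a finite simplicial complex, let $f\colon K\to\mathbb{R}$ be an injective filtration function, and let $\sigma_1,\sigma_2$ be two $n$-dimensional simplices of $K$. Assume that for some $\varepsilon>0$ we have $$f(\sigma_1)<f(\sigma_2)<f(\sigma_1)+2\varepsilon.$$ Then there exists an injective filtration function $g$ on $K$ such that $\|f-g\|_\infty\le\varepsilon$ and $g(\sigma_2)<g(\sigma_1)$.
   Context: A filtration function on a finite simplicial complex $K$ is a map $f\colon K\to\mathbb{R}$ such that $f(\sigma)\le f(\tau)$ whenever $\sigma$ is a face of $\tau$. For two functions $f,g\colon K\to\mathbb{R}$, $\|f-g\|_\infty=\max_{\sigma\in K}|f(\sigma)-g(\sigma)|$. *)

(* Defs.v *)
From mathcomp Require Import all_boot all_order all_algebra.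
From mathcomp Require Import reals.
Set Implicit Arguments. Unset Strict Implicit. Unset Printing Implicit Defensive.
Import Order.TTheory GRing.Theory Num.Theory.
Local Open Scope ring_scope.

Definition simplicial_complex (V : finType) (K : {set {set V}}) : Prop :=
  (forall s, s \in K -> s != set0) /\
  (forall s t : {set V}, s \in K -> t \subset s -> t != set0 -> t \in K).

Definition simplex_dim (V : finType) (s : {set V}) : nat := #|s|.-1.

(* A filtration function on K (only its values on K matter). *)
Definition filtration (R : realType) (V : finType) (K : {set {set V}})
  (f : {set V} -> R) : Prop :=
  forall s t : {set V}, s \in K -> t \in K -> s \subset t -> f s <= f t.

Definition injective_on_K (R : realType) (V : finType) (K : {set {set V}})
  (f : {set V} -> R) : Prop :=
  forall s t : {set V}, s \in K -> t \in K -> f s = f t -> s = t.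

Definition sup_dist_le (R : realType) (V : finType) (K : {set {set V}})
  (f g : {set V} -> R) (e : R) : Prop :=
  forall s, s \in K -> `|f s - g s| <= e.

(* Main.v *)
Require Import Defs.
From mathcomp Require Import all_boot all_order all_algebra.
From mathcomp Require Import reals.
From mathcomp Require Import lra.
Import Order.TTheory GRing.Theory Num.Theory.
Local Open Scope ring_scope.

Lemma key (R : realType) (V : finType) (K : {set {set V}})
  (f : {set V} -> R) (s1 s2 : {set V}) (eps k : R) :
  filtration K f -> injective_on_K K f ->
  ~~ (s1 \subset s2) ->
  f s1 < f s2 -> 0 < k -> 2 * k < 1 -> (1 - k) * (f s2 - f s1) <= eps ->
  exists g : {set V} -> R,
    [/\ filtration K g, injective_on_K K g, sup_dist_le K f g eps
      & g s2 < g s1].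
Proof.
move=> Hf Hi Hn Hab k0 k1 ke.
pose g := fun t => if (f s1 <= f t) && (f t <= f s2) then
   (if t \subset s2 then f s1 + k * (f t - f s1) else f s2 - k * (f s2 - f t)) else f t.
exists g; split.
- move=> s t sK tK st; have := Hf s t sK tK st; rewrite /g => fst.
  case: (boolP (t \subset s2)) => ts2.
    have -> : s \subset s2 by apply: subset_trans ts2.
    by case: ifP => /andP; case: ifP => /andP; nra.
  case: (boolP (s \subset s2)) => ss2;
    by case: ifP => /andP; case: ifP => /andP; nra.
- move=> s t sK tK; rewrite /g => E; apply: Hi => //.
  case: (boolP (t \subset s2)) E => ts2; case: (boolP (s \subset s2)) => ss2;
    case: ifP => /andP; case: ifP => /andP; try nra.
- move=> s sK; rewrite /g ler_norml.
  case: ifP => /andP; [case: ifP => _ | ]; move=> H; apply/andP; split; nra.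
- rewrite /g !lexx (ltW Hab) subxx (negbTE Hn) /=; have h : 0 < (1 - 2*k) * (f s2 - f s1) by apply: mulr_gt0; lra.
  nra.
Qed.

Theorem proposition2p1 (R : realType) (V : finType) (K : {set {set V}})
  (f : {set V} -> R) (n : nat) (s1 s2 : {set V}) (eps : R) :
  simplicial_complex K ->
  filtration K f -> injective_on_K K f ->
  s1 \in K -> s2 \in K -> simplex_dim s1 = n -> simplex_dim s2 = n ->
  0 < eps ->
  f s1 < f s2 -> f s2 < f s1 + 2 * eps ->
  exists g : {set V} -> R,
    [/\ filtration K g, injective_on_K K g, sup_dist_le K f g eps
      & g s2 < g s1].
Proof.
move=> [Hne _] Hf Hi s1K s2K d1 d2 e0 H12 H2e.
have Hn : ~~ (s1 \subset s2).
  apply/negP => sub.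
  have c1 : (0 < #|s1|)%N by rewrite card_gt0; apply: Hne.
  have c2 : (0 < #|s2|)%N by rewrite card_gt0; apply: Hne.
  have ec : (#|s2| <= #|s1|)%N.
    move: d1 d2; rewrite /simplex_dim => d1 d2.
    by rewrite -(prednK c1) -(prednK c2) d1 d2.
  have E : s1 = s2 by apply/eqP; rewrite eqEcard sub ec.
  by move: H12; rewrite E ltxx.
set d := f s2 - f s1.
have d0 : 0 < d by rewrite subr_gt0.
have hd : d = f s2 - f s1 by [].
set q := eps / d.
have qd : q * d = eps by rewrite /q divfK // gt_eqF.
apply: (@key _ _ _ _ _ _ _ (Num.max (1/4) (1 - q))) => //.
- by rewrite lt_max; apply/orP; left; lra.
- have : 1 - q < 1/2 by nra.
  rewrite /Num.max; case: ifP => _; lra.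
- have : 1 - q <= Num.max (1/4) (1 - q) by rewrite le_max lexx orbT.
  rewrite -/d => h; nra.
Qed.
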